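(* Let $D$ be a divisible periodic subgroup of an abelian group $A$ and let $\varphi$ be an endomorphism of $A$. If $\varphi$ is inertial or left-inertial, then $\varphi(D)\subseteq D$ and $\varphi$ acts on $D$ as a multiplication.
   Context: Abelian groups are written additively. An endomorphism $\varphi$ of $A$ is inertial if $(\varphi(X)+X)/X$ is finite for every subgroup $X\le A$, and left-inertial if $X/(X\cap\varphi(X))$ is finite for every $X\le A$. On a periodic group, a multiplication is the componentwise action of an element of $\prod_p\mathbb{Z}_p$ ($p$-adic integers) on the $p$-components. *)

(* Defs.v *)
From HB Require Import structures.
From mathcomp Require Import all_boot all_order all_algebra.
Set Implicit Arguments. Unset Strict Implicit. Unset Printing Implicit Defensive.
Import GRing.Theory.
Local Open Scope ring_scope.

Section Defs.
Variable A : zmodType.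

Definition is_subgroup (X : A -> Prop) : Prop :=
  X 0 /\ (forall x y, X x -> X y -> X (x - y)).

(* Y/(Y ∩ X) is finite: Y is covered by finitely many cosets of X
   (when X ⊆ Y this is exactly: the quotient Y/X is finite). *)
Definition fin_quot (Y X : A -> Prop) : Prop :=
  exists s : seq A, forall y, Y y -> exists2 a, a \in s & X (y - a).

Definition image_of (f : A -> A) (X : A -> Prop) : A -> Prop :=
  fun y => exists2 u, X u & y = f u.

(* φ is inertial: (φ(X)+X)/X finite for every subgroup X *)
Definition inertial (f : A -> A) : Prop :=
  forall X, is_subgroup X ->
    fin_quot (fun y => exists u v, [/\ X u, X v & y = f u + v]) X.

(* φ is left-inertial: X/(X ∩ φ(X)) finite for every subgroup X *)
Definition left_inertial (f : A -> A) : Prop :=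
  forall X, is_subgroup X ->
    fin_quot X (fun y => X y /\ image_of f X y).

Definition periodic (D : A -> Prop) : Prop :=
  forall x, D x -> exists2 n : nat, (0 < n)%N & x *+ n = 0.

Definition divisible (D : A -> Prop) : Prop :=
  forall x (n : nat), D x -> (0 < n)%N -> exists2 y, D y & y *+ n = x.
End Defs.

(* A p-adic integer, as an element of the inverse limit of the Z/p^k:
   a coherent sequence of residues a k mod p^k. *)
Definition is_padic (p : nat) (a : nat -> nat) : Prop :=
  forall k, (a k < p ^ k)%N /\ (a k.+1 = a k %[mod p ^ k])%N.

(* y = α·x where α = (α p)_p ∈ ∏_p Z_p acts componentwise on the p-components
   of the periodic element x: if n x = 0 (n > 0), α acts as any integer c with
   c ≡ α_p mod p^(v_p n) for every prime p | n. *)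
Definition padic_mult (A : zmodType) (alpha : nat -> nat -> nat) (x y : A) : Prop :=
  exists n : nat, [/\ (0 < n)%N, x *+ n = 0 &
    exists c : nat, (forall p, prime p -> p %| n ->
        c = alpha p (logn p n) %[mod p ^ logn p n])%N /\ y = x *+ c].

(* Main.v *)
Require Import Defs.
From HB Require Import structures.
From mathcomp Require Import all_boot all_order all_algebra.
From Stdlib Require Import ClassicalEpsilon.
From mathcomp Require Import ring.
Set Implicit Arguments. Unset Strict Implicit.
Import GRing.Theory.
Local Open Scope ring_scope.

Lemma sg_opp (A : zmodType) (D : A -> Prop) x : is_subgroup D -> D x -> D (- x).
Proof. move=> [D0 DB] Dx; have := DB 0 x D0 Dx; by rewrite sub0r. Qed.

Lemma sg_add (A : zmodType) (D : A -> Prop) x y : is_subgroup D -> D x -> D y -> D (x + y).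
Proof. move=> sD Dx Dy; have := (proj2 sD) x (- y) Dx (sg_opp sD Dy); by rewrite opprK. Qed.

Lemma sg_muln (A : zmodType) (D : A -> Prop) x n : is_subgroup D -> D x -> D (x *+ n).
Proof. move=> sD Dx; elim: n => [|n IH]; first by rewrite mulr0n; case: sD.
by rewrite mulrS; apply: sg_add. Qed.

Lemma sg_mulz (A : zmodType) (D : A -> Prop) x (z : int) : is_subgroup D -> D x -> D (x *~ z).
Proof. move=> sD Dx; case: z => n /=; first exact: sg_muln.
by rewrite NegzE mulrNz; apply: sg_opp => //; apply: sg_muln. Qed.

Lemma mulrz_eq0_abs (A : zmodType) (x : A) (z : int) : (x *~ z == 0) = (x *+ `|z|%N == 0).
Proof. case: z => n; first by rewrite /= -pmulrn.
by rewrite NegzE mulrNz oppr_eq0 -pmulrn. Qed.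

Lemma gcd_kill (A : zmodType) (x : A) (m n : int) :
  x *~ m = 0 -> x *~ n = 0 -> x *~ gcdz m n = 0.
Proof.
move=> hm hn; have [u [v <-]] := Bezoutz m n.
by rewrite mulrzDr ![u * m]mulrC ![v * n]mulrC !mulrzA hm hn !mul0rz addr0.
Qed.

Lemma fin_div (A : zmodType) (X Y : A -> Prop) :
  is_subgroup X -> (forall y n, Y y -> Y (y *+ n)) ->
  (forall y (M : nat), Y y -> (0 < M)%N -> exists2 w, Y w & w *+ M = y) ->
  fin_quot Y X -> forall y, Y y -> X y.
Proof.
move=> sX Ymul Ydiv [s hs] y Yy.
have [a0 a0s _] := hs y Yy.
have s_gt0 : (0 < size s)%N by case: s hs a0s {Yy} => //.
have [w Yw wM] := Ydiv y (size s)`! Yy (fact_gt0 _).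
pose a i := epsilon (inhabits (0 : A)) (fun a => a \in s /\ X (w *+ i - a)).
have aP i : a i \in s /\ X (w *+ i - a i).
  apply: (epsilon_spec (inhabits (0 : A)) (fun a => a \in s /\ X (w *+ i - a))).
  by have [b bs Xb] := hs (w *+ i) (Ymul _ _ Yw); exists b.
pose L := map a (iota 0 (size s).+1).
have nuL : ~~ uniq L.
  apply/negP => uL.
  have : (size L <= size s)%N.
    have sub : {subset L <= s} by move=> b /mapP [i _ ->]; case: (aP i).
    exact: (uniq_leq_size uL sub).
  by rewrite size_map size_iota ltnn.
have [i [j [ij jL eqij]]] := uniqPn 0 nuL.
move: jL; rewrite size_map size_iota => jL.
have iL : (i < (size s).+1)%N by apply: ltn_trans ij jL.
move: eqij; rewrite !(nth_map 0%N) ?size_iota // !nth_iota // !add0n => eqij.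
have Xd : X (w *+ (j - i)).
  rewrite mulrnBr; last exact: ltnW.
  have := (proj2 sX) _ _ (proj2 (aP j)) (proj2 (aP i)).
  by rewrite eqij opprB addrA subrK.
have dd : (j - i %| (size s)`!)%N.
  apply: dvdn_fact; rewrite subn_gt0 ij /=.
  by rewrite leq_subLR; apply: leq_trans (leq_addl _ _); rewrite -ltnS.
by rewrite -wM -(divnK dd) mulnC mulrnA; apply: sg_muln.
Qed.

Lemma exact_order (A : zmodType) (g : A) (N : nat) : (0 < N)%N -> g *+ N = 0 ->
  exists2 m0 : nat, (0 < m0)%N & forall t : int, g *~ t = 0 <-> (m0%:Z %| t)%Z.
Proof.
move=> N0 gN.
have exP : exists n, (0 < n)%N && (g *+ n == 0) by exists N; rewrite N0 gN eqxx.
case: (ex_minnP exP) => m0 /andP [m0p /eqP gm0] mmin.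
exists m0 => // t; split.
- move=> /eqP; rewrite mulrz_eq0_abs => /eqP gt.
  rewrite dvdzE /=.
  have := gt; rewrite {1}(divn_eq `|t|%N m0) mulrnDr (mulnC (_ %/ _)%N) mulrnA gm0 mul0rn add0r => gr.
  rewrite /dvdn; apply/eqP.
  case: (posnP (`|t| %% m0)%N) => [->|pos] //.
  have := mmin _ (introT andP (conj pos (introT eqP gr))).
  by rewrite leqNgt ltn_mod m0p.
- move=> /dvdzP [q ->]; rewrite pmulrn in gm0.
  by rewrite mulrC mulrzA gm0 mul0rz.
Qed.

Lemma cyc (A : zmodType) (g : A) (N : nat) : (0 < N)%N -> g *+ N = 0 ->
  forall a b : int, (forall j : nat, (g *~ a) *+ j = 0 -> (g *~ b) *+ j = 0) ->
  exists c : int, g *~ b = (g *~ a) *~ c.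
Proof.
move=> N0 gN a b H.
have [m0 m0p ordg] := exact_order N0 gN.
have [u [v huv]] := Bezoutz a m0%:Z.
set d := gcdz a m0 in huv.
have gd : g *~ d = (g *~ a) *~ u.
  rewrite -huv mulrzDr (proj2 (ordg (v * m0%:Z))); last exact: dvdz_mull.
  by rewrite addr0 mulrC mulrzA.
have /dvdzP [e he] : (d %| m0%:Z)%Z by apply: dvdz_gcdr.
have e0 : e != 0.
  by apply/eqP => e0; move: he; rewrite e0 mul0r => /eqP; rewrite eq_sym eqz_nat; by case: (m0) m0p.
have ka : (g *~ a) *~ e = 0.
  have /dvdzP [a' ha'] : (d %| a)%Z by apply: dvdz_gcdl.
  rewrite mulrzA_C; apply: (proj2 (ordg _)).
  by rewrite he ha' mulrCA; apply: dvdz_mull; apply: dvdzz.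
have kb : (g *~ b) *~ e = 0.
  apply/eqP; rewrite mulrz_eq0_abs; apply/eqP; apply: H.
  by apply/eqP; rewrite -mulrz_eq0_abs ka.
have /dvdzP [b' hb'] : (d %| b)%Z.
  rewrite -(dvdz_mul2l e0) -he; apply/(ordg _).
  by rewrite -mulrzA_C kb.
exists (b' * u); rewrite hb' [b' * d]mulrC [in LHS]mulrzA gd.
by rewrite mulrzA_C.
Qed.

Definition dv (A : zmodType) (D : A -> Prop) (y : A) (m : nat) : A :=
  epsilon (inhabits (0 : A)) (fun z => D z /\ z *+ m = y).

Fixpoint chain (A : zmodType) (D : A -> Prop) (x : A) (k : nat) : A :=
  match k with 0 => x | k'.+1 => dv D (chain D x k') k end.

Lemma dvP (A : zmodType) (D : A -> Prop) y m : divisible D -> D y -> (0 < m)%N ->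
  D (dv D y m) /\ dv D y m *+ m = y.
Proof.
move=> dD Dy m0; apply: (epsilon_spec (inhabits (0 : A)) (fun z => D z /\ z *+ m = y)).
by have [z Dz hz] := dD y m Dy m0; exists z.
Qed.

Lemma chainD (A : zmodType) (D : A -> Prop) x : divisible D -> D x ->
  forall k, D (chain D x k).
Proof. by move=> dD Dx; elim=> [|k IH] //=; case: (dvP dD IH (ltn0Sn k)). Qed.

Lemma chainS (A : zmodType) (D : A -> Prop) x : divisible D -> D x ->
  forall k, chain D x k.+1 *+ k.+1 = chain D x k.
Proof. by move=> dD Dx k /=; case: (dvP dD (chainD dD Dx k) (ltn0Sn k)). Qed.

Lemma chain_lift (A : zmodType) (D : A -> Prop) x : divisible D -> D x ->
  forall k j, exists q : nat, chain D x k = chain D x (k + j) *+ q.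
Proof.
move=> dD Dx k; elim=> [|j [q hq]]; first by exists 1%N; rewrite addn0.
exists ((k + j).+1 * q)%N; rewrite mulrnA addnS chainS //.
Qed.

Lemma power (A : zmodType) (D : A -> Prop) (phi : {additive A -> A}) :
  is_subgroup D -> divisible D -> periodic D ->
  (inertial phi \/ left_inertial phi) ->
  forall x, D x -> exists c : int, phi x = x *~ c.
Proof.
move=> sD dD pD Hin x Dx.
pose xs := chain D x.
pose X := fun y => exists k (z : int), y = xs k *~ z.
have lift2 k K : (k <= K)%N -> exists q : nat, xs k = xs K *+ q.
  move=> kK; have [q hq] := chain_lift dD Dx k (K - k).
  by exists q; rewrite /xs hq subnKC.
have Xk k (z : int) K : (k <= K)%N -> exists z', xs k *~ z = xs K *~ z'.
  move=> /lift2 [q ->]; exists (q%:Z * z); by rewrite mulrzA -pmulrn.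
have sX : is_subgroup X.
  split; first by exists 0%N, 0; rewrite mulr0z.
  move=> y1 y2 [k1 [z1 ->]] [k2 [z2 ->]].
  have [z1' ->] := Xk k1 z1 (k1 + k2)%N (leq_addr _ _).
  have [z2' ->] := Xk k2 z2 (k1 + k2)%N (leq_addl _ _).
  by exists (k1 + k2)%N, (z1' - z2'); rewrite mulrzBr.
have Xmul y n : X y -> X (y *+ n).
  by move=> [k [z ->]]; exists k, (z * n%:Z); rewrite mulrzA -pmulrn.
have Xdiv y M : X y -> (0 < M)%N -> exists2 w, X w & w *+ M = y.
  move=> [k [z ->]] M0.
  pose L := (M * k.+1).-1.
  have LS : L.+1 = (M * k.+1)%N by rewrite /L prednK // muln_gt0 M0.
  have kL : (k <= L)%N by rewrite -ltnS LS leq_pmull.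
  have [z' ->] := Xk k z L kL.
  exists (xs L.+1 *~ (z' * k.+1%:Z)); first by exists L.+1, (z' * k.+1%:Z).
  rewrite /xs -(chainS dD Dx L) LS !pmulrn -!mulrzA; congr (_ *~ _).
  rewrite PoszM; ring.
have X0 : X x by exists 0%N, 1; rewrite mulr1z.
have phiker y j : y *+ j = 0 -> phi y *+ j = 0 by move=> h; rewrite -raddfMn h raddf0.
case: Hin => [Hi | Hl].
- pose Y := fun y => exists u v, [/\ X u, X v & y = phi u + v].
  have Ymul y n : Y y -> Y (y *+ n).
    move=> [u [v [Xu Xv ->]]]; exists (u *+ n), (v *+ n); split; try exact: Xmul.
    by rewrite mulrnDl raddfMn.
  have Ydiv y M : Y y -> (0 < M)%N -> exists2 w, Y w & w *+ M = y.
    move=> [u [v [Xu Xv ->]]] M0.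
    have [w1 Xw1 <-] := Xdiv u M Xu M0; have [w2 Xw2 <-] := Xdiv v M Xv M0.
    exists (phi w1 + w2); first by exists w1, w2.
    by rewrite mulrnDl raddfMn.
  have Xphi : X (phi x).
    apply: (fin_div sX Ymul Ydiv (Hi X sX)); exists x, 0; split => //.
      by case: sX.
    by rewrite addr0.
  case: Xphi => k [z hz].
  have [q hq] := lift2 0%N k (leq0n _).
  have [N N0 hN] := pD _ (chainD dD Dx k).
  have hyp : forall j, (xs k *~ q%:Z) *+ j = 0 -> (xs k *~ z) *+ j = 0.
    by move=> j; rewrite -pmulrn -hq -hz; apply: phiker.
  have [c hc] := cyc N0 hN hyp.
  by exists c; rewrite hz hc -pmulrn -hq.
- pose Z := fun y => X y /\ image_of phi X y.
  have sZ : is_subgroup Z.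
    split; first by split; [case: sX | exists 0; [case: sX | rewrite raddf0]].
    move=> y1 y2 [Xy1 [u1 Xu1 e1]] [Xy2 [u2 Xu2 e2]]; split.
      exact: (proj2 sX _ _ Xy1 Xy2).
    exists (u1 - u2); first exact: (proj2 sX _ _ Xu1 Xu2).
    by rewrite e1 e2 raddfB.
  have [_ [u [k [z hu]] hx]] := fin_div sZ Xmul Xdiv (Hl X sX) X0.
  have [q hq] := lift2 0%N k (leq0n _).
  have [N N0 hN] := pD _ (chainD dD Dx k).
  have hN' : phi (xs k) *+ N = 0 by rewrite -raddfMn hN raddf0.
  have hyp : forall j, (phi (xs k) *~ z) *+ j = 0 -> (phi (xs k) *~ q%:Z) *+ j = 0.
    move=> j; rewrite -raddfMz -hu -hx -pmulrn -(raddfMn phi) -hq; apply: phiker.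
  have [c hc] := cyc N0 hN' hyp.
  exists c; rewrite -pmulrn -(raddfMn phi) -hq in hc; rewrite hc -raddfMz -hu -hx.
  by [].
Qed.

Lemma kill_dvd (A : zmodType) (y : A) (n : nat) (t : int) :
  y *+ n = 0 -> (n%:Z %| t)%Z -> y *~ t = 0.
Proof. by move=> hy /dvdzP [q ->]; rewrite mulrC mulrzA -pmulrn hy mul0rz. Qed.

Lemma gcd_ppow (p j : nat) (m : int) : prime p ->
  exists2 i, (i <= j)%N & gcdz m (p ^ j)%N%:Z = (p ^ i)%N%:Z.
Proof.
move=> pp; have : (gcdn `|m| (p ^ j) %| p ^ j)%N by apply: dvdn_gcdr.
by case/(dvdn_pfactor _ _ pp) => i ij hi; exists i => //; rewrite /gcdz /= hi.
Qed.

Lemma ordp (A : zmodType) (x : A) (p k : nat) : prime p -> (0 < k)%N ->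
  x *+ p ^ k = 0 -> x *+ p ^ k.-1 != 0 -> forall t : int, x *~ t = 0 -> ((p ^ k)%N%:Z %| t)%Z.
Proof.
move=> pp k0 xk xk1 t xt.
have [i ik hi] := gcd_ppow k t pp.
have := gcd_kill xt (kill_dvd xk (dvdzz _)); rewrite hi => xi.
case: (ltnP i k) => [ilt|ige].
  case/negP: xk1; apply/eqP; rewrite pmulrn; apply: kill_dvd xi _.
  by rewrite dvdzE /= dvdn_exp2l // -ltnS prednK.
have -> : k = i by apply/eqP; rewrite eqn_leq ik ige.
by rewrite -hi; apply: dvdz_gcdl.
Qed.

Lemma LB (A : zmodType) (x y : A) (p j : nat) (m e : int) : prime p ->
  y *+ p ^ j.+1 = 0 -> y *~ m = x *~ e ->
  ~ (exists t : int, y *+ p ^ j = x *~ t) -> y *~ m = 0.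
Proof.
move=> pp yj hm nex.
have [i ij hi] := gcd_ppow j.+1 m pp.
case: (ltnP i j.+1) => [ilt|ige].
  have [u [v huv]] := Bezoutz m (p ^ j.+1)%N%:Z.
  have yi : y *~ (p ^ i)%N%:Z = x *~ (e * u).
    rewrite -hi -huv mulrzDr (kill_dvd yj (y := y) (t := v * _)); last first.
      by apply: dvdz_mull; apply: dvdzz.
    by rewrite addr0 (mulrC u m) [LHS]mulrzA hm -mulrzA.
  case: nex; exists (e * u * (p ^ (j - i))%N%:Z).
  rewrite mulrzA -yi -mulrzA -PoszM -expnD subnKC; last by rewrite -ltnS.
  by rewrite pmulrn.
have -> : m = (m %/ (p ^ j.+1)%N%:Z)%Z * (p ^ j.+1)%N%:Z.
  rewrite divzK //; have -> : j.+1 = i by apply/eqP; rewrite eqn_leq ij ige.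
  by rewrite -hi; apply: dvdz_gcdl.
by apply: (kill_dvd yj); apply: dvdz_mull; apply: dvdzz.
Qed.

Lemma Sp (A : zmodType) (D : A -> Prop) (phi : {additive A -> A}) (p k : nat) (x : A) (a : int) :
  prime p -> is_subgroup D -> (forall y, D y -> exists c : int, phi y = y *~ c) ->
  D x -> (0 < k)%N -> x *+ p ^ k = 0 -> x *+ p ^ k.-1 != 0 -> phi x = x *~ a ->
  forall y, D y -> y *+ p ^ k = 0 -> phi y = y *~ a.
Proof.
move=> pp sD pw Dx k0 xk xk1 hx.
have oX := ordp pp k0 xk xk1.
suff H : forall j y, D y -> (j <= k)%N -> y *+ p ^ j = 0 -> phi y = y *~ a.
  by move=> y Dy yk; apply: (H k).
elim=> [|j IH] y Dy jk yj.
  by move: yj; rewrite expn0 mulr1n => ->; rewrite raddf0 mul0rz.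
have p0 : (0 < p)%N by apply: prime_gt0.
have yk : y *+ p ^ k = 0.
  rewrite -(subnKC jk) expnD mulrnA yj mul0rn //.
case: (classic (exists t : int, y *+ p ^ j = x *~ t)) => [[t ht]|nex].
- have tp : x *~ (t * p%:Z) = 0.
    by rewrite mulrzA -ht -pmulrn -mulrnA -expnSr yj.
  have /dvdzP [u hu] : ((p ^ k.-1)%N%:Z %| t)%Z.
    have pz : p%:Z != 0 by rewrite eqz_nat -lt0n.
    rewrite -(dvdz_mul2r pz) -PoszM -expnSr prednK //; exact: oX.
  pose s := u * (p ^ (k.-1 - j))%N%:Z.
  have y1j : (y - x *~ s) *+ p ^ j = 0.
    rewrite mulrnBl ht pmulrn mulrzA_C -mulrzBr /s mulrCA -PoszM -expnD subnKC.
      by rewrite -hu subrr mulr0z.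
    by rewrite -ltnS prednK.
  have D1 : D (y - x *~ s) by apply: (proj2 sD) => //; apply: sg_mulz.
  have := IH _ D1 (ltnW jk) y1j; rewrite raddfB raddfMz hx => e.
  move/eqP: e; rewrite subr_eq => /eqP ->.
  by rewrite mulrzBl -!mulrzA (mulrC s a) subrK.
- have [b hb] := pw y Dy.
  have [c hc] := pw (x + y) (sg_add sD Dx Dy).
  have eq1 : y *~ (b - c) = x *~ (c - a).
    move: hc; rewrite raddfD hx hb mulrzDl => H.
    apply/eqP; rewrite !mulrzBr subr_eq addrAC -H addrAC subrr add0r //.
  have z1 := LB pp yj eq1 nex.
  have : x *~ (c - a) = 0 by rewrite -eq1.
  move/oX => dv; have := kill_dvd yk dv.
  move: z1; rewrite !mulrzBr => /eqP; rewrite subr_eq0 => /eqP e1 /eqP.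
  by rewrite subr_eq0 hb e1 => /eqP.
Qed.

Lemma mulrn_mod (A : zmodType) (x : A) (n a : nat) : x *+ n = 0 -> x *+ a = x *+ (a %% n).
Proof.
by move=> xn; rewrite {1}(divn_eq a n) mulrnDr mulnC mulrnA xn mul0rn add0r.
Qed.

Lemma mulrn_eqmod (A : zmodType) (x : A) (n a b : nat) : x *+ n = 0 ->
  (a = b %[mod n])%N -> x *+ a = x *+ b.
Proof. by move=> xn e; rewrite (mulrn_mod a xn) e -mulrn_mod. Qed.

Lemma L0 (A : zmodType) (D : A -> Prop) (p : nat) : is_subgroup D ->
  forall k y, D y -> y != 0 -> y *+ p ^ k = 0 -> exists z, [/\ D z, z != 0 & z *+ p = 0].
Proof.
move=> sD; elim=> [|k IH] y Dy y0 yk.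
  by move: yk; rewrite expn0 mulr1n => /eqP; rewrite (negbTE y0).
case: (eqVneq (y *+ p) 0) => [yp|yp]; first by exists y.
apply: (IH (y *+ p)) => //; first exact: sg_muln.
by rewrite -mulrnA -expnS.
Qed.

Lemma L1 (A : zmodType) (D : A -> Prop) (p k : nat) (z : A) : divisible D -> (0 < p)%N ->
  D z -> z != 0 -> z *+ p = 0 ->
  exists u, [/\ D u, u *+ p ^ k.+1 = 0 & u *+ p ^ k != 0].
Proof.
move=> dD p0 Dz z0 zp.
have pk : (0 < p ^ k)%N by rewrite expn_gt0 p0.
have [u Du hu] := dD z (p ^ k)%N Dz pk.
by exists u; split => //; [rewrite expnSr mulrnA hu zp | rewrite hu].
Qed.

Definition valid (A : zmodType) (D : A -> Prop) (phi : A -> A) (p k r : nat) : Prop :=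
  forall y, D y -> y *+ p ^ k = 0 -> phi y = y *+ r.

Definition vb (A : zmodType) (D : A -> Prop) (phi : A -> A) (p k : nat) (r : nat) : bool :=
  (r < p ^ k)%N && (if excluded_middle_informative (valid D phi p k r) then true else false).

Definition alpha (A : zmodType) (D : A -> Prop) (phi : A -> A) (p k : nat) : nat :=
  match excluded_middle_informative (exists r, vb D phi p k r) with
  | left H => ex_minn H
  | right _ => 0%N
  end.

Lemma vbP (A : zmodType) (D : A -> Prop) (phi : A -> A) p k r :
  vb D phi p k r <-> (r < p ^ k)%N /\ valid D phi p k r.
Proof.
rewrite /vb; case: excluded_middle_informative => h; split.
- by move/andP => [? _]; split.
- by case=> ? ?; apply/andP; split.
- by move/andP => [_ ].
- by case => _ H; case: h.
Qed.

Lemma alphaP (A : zmodType) (D : A -> Prop) (phi : A -> A) p k :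
  (exists r, vb D phi p k r) ->
  vb D phi p k (alpha D phi p k) /\ forall r, vb D phi p k r -> (alpha D phi p k <= r)%N.
Proof.
move=> ex; rewrite /alpha; case: excluded_middle_informative => // H.
by case: (ex_minnP H).
Qed.

Lemma valid_ex (A : zmodType) (D : A -> Prop) (phi : {additive A -> A}) p k :
  prime p -> is_subgroup D -> divisible D ->
  (forall y, D y -> exists c : int, phi y = y *~ c) ->
  exists r, vb D phi p k r.
Proof.
move=> pp sD dD pw.
have p0 : (0 < p)%N by apply: prime_gt0.
have triv : (forall y, D y -> y *+ p ^ k = 0 -> y = 0) -> exists r, vb D phi p k r.
  move=> h; exists 0%N; apply/vbP; split; first by rewrite expn_gt0 p0.
  by move=> y Dy yk; rewrite (h y Dy yk) raddf0 mulr0n.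
move: triv; case: k => [|k] triv.
  by apply: triv => y _; rewrite expn0 mulr1n.
case: (classic (exists y, [/\ D y, y != 0 & y *+ p ^ k.+1 = 0])) => [[y [Dy y0 yk]]|nex]; last first.
  apply: triv => y Dy yk; apply/eqP; apply/negP => y0; apply: nex; exists y; split => //.
  by apply/negP.
have [z [Dz z0 zp]] := L0 sD Dy y0 yk.
have [u [Du u1 u0]] := L1 k dD p0 Dz z0 zp.
have [a ha] := pw u Du.
have V := Sp pp sD pw Du (ltn0Sn k) u1 u0 ha.
have pk0 : (p ^ k.+1)%N%:Z != 0 by rewrite eqz_nat -lt0n expn_gt0 p0.
exists `|(a %% (p ^ k.+1)%N%:Z)%Z|%N; apply/vbP; split.
  rewrite -ltz_nat gez0_abs ?modz_ge0 //.
  by have := ltz_mod a pk0; rewrite Num.Theory.ger0_norm.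
move=> w Dw wk; rewrite (V w Dw wk) pmulrn gez0_abs ?modz_ge0 //.
rewrite {1}(divz_eq a (p ^ k.+1)%N%:Z) mulrzDr.
by rewrite (kill_dvd wk (t := _ * _)) ?add0r //; apply: dvdz_mull; apply: dvdzz.
Qed.

Lemma cong_p (A : zmodType) (u : A) (p k a b : nat) : prime p -> (0 < k)%N ->
  u *+ p ^ k = 0 -> u *+ p ^ k.-1 != 0 -> u *+ a = u *+ b -> (a = b %[mod p ^ k])%N.
Proof.
move=> pp k0 uk uk1.
wlog ba : a b / (b <= a)%N.
  move=> W h; case: (leqP b a) => [ba|ab]; first exact: W.
  by symmetry; apply: W (ltnW ab) _.
move=> h; apply/eqP; rewrite eqn_mod_dvd //.
have : u *~ (a - b)%N%:Z = 0 by rewrite -pmulrn mulrnBr // h subrr.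
by move/(ordp pp k0 uk uk1); rewrite dvdzE.
Qed.

Lemma alpha_padic (A : zmodType) (D : A -> Prop) (phi : {additive A -> A}) p :
  prime p -> is_subgroup D -> divisible D ->
  (forall y, D y -> exists c : int, phi y = y *~ c) ->
  is_padic p (alpha D phi p).
Proof.
move=> pp sD dD pw k.
have p0 : (0 < p)%N by apply: prime_gt0.
have [/vbP [ak Vk] _] := alphaP (valid_ex k pp sD dD pw).
have [/vbP [ak1 Vk1] _] := alphaP (valid_ex k.+1 pp sD dD pw).
split => //.
case: k ak Vk ak1 Vk1 => [|k] ak Vk ak1 Vk1; first by rewrite expn0 !modn1.
case: (classic (exists z, [/\ D z, z != 0 & z *+ p = 0])) => [[z [Dz z0 zp]]|nex].
  have [u [Du u1 u0]] := L1 k dD p0 Dz z0 zp.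
  apply: (cong_p pp (ltn0Sn k) u1 u0).
  rewrite -Vk1 // -?Vk //.
  by rewrite expnS mulnC mulrnA u1 mul0rn.
have zero m : alpha D phi p m = 0%N.
  have [_ mn] := alphaP (valid_ex m pp sD dD pw).
  apply/eqP; rewrite -leqn0; apply: mn; apply/vbP; split; first by rewrite expn_gt0 p0.
  move=> y Dy ym; case: (eqVneq y 0) => [->|y0]; first by rewrite raddf0 mul0rn.
  by case: nex; apply: (L0 sD Dy y0 ym).
by rewrite !zero.
Qed.

Lemma kill_dvdn (A : zmodType) (x : A) (n t : nat) : x *+ n = 0 -> (n %| t)%N -> x *+ t = 0.
Proof. by move=> xn d; rewrite -(divnK d) mulnC mulrnA xn mul0rn. Qed.

Lemma final (A : zmodType) (D : A -> Prop) (phi : {additive A -> A}) :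
  is_subgroup D -> divisible D ->
  (forall y, D y -> exists c : int, phi y = y *~ c) ->
  forall n, (0 < n)%N -> forall x, D x -> x *+ n = 0 ->
  exists c : nat, (forall p, prime p -> (p %| n)%N ->
      (c = alpha D phi p (logn p n) %[mod p ^ logn p n])%N) /\ phi x = x *+ c.
Proof.
move=> sD dD pw; elim/ltn_ind => n IH n0 x Dx xn.
case: (leqP n 1) => [n1|n1].
  have n_1 : n = 1%N by apply/eqP; rewrite eqn_leq n1 n0.
  rewrite n_1 in xn *; move: xn; rewrite mulr1n => ->; exists 0%N; split; last by rewrite raddf0 mul0rn.
  move=> p pp; rewrite dvdn1 => /eqP p1; move: pp; rewrite p1 //.
pose p := pdiv n.
have pp : prime p by apply: pdiv_prime.
have [m cop hn] := pfactor_coprime pp n0.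
set v := logn p n in hn.
have m0 : (0 < m)%N by move: n0; rewrite hn muln_gt0 => /andP [].
have v0 : (0 < v)%N by rewrite /v logn_gt0 mem_primes pp n0 pdiv_dvd.
have p1 : (1 < p)%N by apply: prime_gt1.
have pv1 : (1 < p ^ v)%N by rewrite -{1}(expn0 p) ltn_exp2l.
have mn : (m < n)%N by rewrite hn ltn_Pmulr.
have cop' : coprime (p ^ v) m by apply: coprimeXl.
pose e := chinese (p ^ v) m 1 0.
pose x1 := x *+ e.
pose x2 := x - x1.
have x1v : x1 *+ p ^ v = 0.
  rewrite -mulrnA; apply: (kill_dvdn xn); rewrite hn; apply: dvdn_mul => //.
  by rewrite /dvdn /e chinese_modr // mod0n.
have x2m : x2 *+ m = 0.
  rewrite mulrnBl -mulrnA (mulrn_eqmod xn (b := m)) ?subrr //.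
  apply/eqP; rewrite hn chinese_remainder 1?coprime_sym //.
  rewrite modnMl modnn eqxx /=.
  by rewrite -modnMml /e chinese_modl // modnMml mul1n.
have Dx1 : D x1 by apply: sg_muln.
have Dx2 : D x2 by apply: (proj2 sD).
have [c2 [Hc2 hphi2]] := IH m mn m0 x2 Dx2 x2m.
have [/vbP [_ Vv] _] := alphaP (valid_ex v pp sD dD pw).
pose c := chinese (p ^ v) m (alpha D phi p v) c2.
exists c; split.
  move=> q qp qn; case: (eqVneq q p) => [->|qnp].
    by rewrite -/v /c chinese_modl.
  have qm : (q %| m)%N.
    move: qn; rewrite hn Euclid_dvdM // Euclid_dvdX // (dvdn_prime2 qp pp) (negbTE qnp) /=.
    by rewrite orbF.
  have -> : logn q n = logn q m.
    rewrite hn lognM ?expn_gt0 ?(prime_gt0 pp) // lognX (logn_prime q pp).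
    by rewrite (negbTE qnp) muln0 addn0.
  rewrite -(Hc2 q qp qm) -(modn_dvdm c (pfactor_dvdnn q m)).
  by rewrite /c chinese_modr // modn_dvdm // pfactor_dvdnn.
have -> : phi x = phi x2 + phi x1 by rewrite -raddfD subrK.
have -> : x *+ c = x2 *+ c + x1 *+ c by rewrite -mulrnDl subrK.
rewrite hphi2 (Vv x1 Dx1 x1v); congr (_ + _).
  by apply: (mulrn_eqmod x2m); rewrite /c chinese_modr.
by apply: (mulrn_eqmod x1v); rewrite /c chinese_modl.
Qed.

Theorem lemma3p4 (A : zmodType) (D : A -> Prop) (phi : {additive A -> A}) :
  is_subgroup D -> divisible D -> periodic D ->
  (inertial phi \/ left_inertial phi) ->
  (forall x, D x -> D (phi x)) /\
  exists alpha : nat -> nat -> nat,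
    (forall p, prime p -> is_padic p (alpha p)) /\
    (forall x, D x -> padic_mult alpha x (phi x)).
Proof.
move=> sD dD pD Hin.
have pw := power sD dD pD Hin.
split.
  move=> x Dx; have [n n0 xn] := pD x Dx.
  have [c [_ ->]] := final sD dD pw n0 Dx xn.
  exact: sg_muln.
exists (alpha D phi); split.
  by move=> p pp; apply: alpha_padic.
move=> x Dx; have [n n0 xn] := pD x Dx.
have [c [H1 H2]] := final sD dD pw n0 Dx xn.
by exists n; split => //; exists c.
Qed.
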